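(* Let $R$ be a commutative ring with $1\neq 0$, $S\subseteq R$ a multiplicatively closed subset, and $M$ a finitely generated faithful multiplication $R$-module. For an ideal $I$ of $R$, the submodule $IM$ is an $S$-quasi-copure submodule of $M$ if and only if $I$ is an $S$-quasi-copure ideal of $R$ (i.e., an $S$-quasi-copure submodule of the $R$-module $R$).
   Context: All rings are commutative with $1\neq 0$ and all modules are unital. A multiplicatively closed subset (m.c.s.) $S$ of $R$ is a subset with $0\notin S$, $1\in S$, and $ss'\in S$ for all $s,s'\in S$. $M$ is a multiplication module if every submodule of $M$ equals $JM$ for some ideal $J$; faithful means $\mathrm{Ann}_R(M)=0$. For an ideal $I$ and submodule $L$, $(L:_M I)=\{m\in M: Im\subseteq L\}$, $(0:_M I)=\{m\in M: Im=0\}$, $(L:_R M)=\{r\in R: rM\subseteq L\}$. A submodule $P$ of $M$ with $(P:_R M)\cap S=\emptyset$ is $S$-prime if there exists $s\in S$ such that whenever $am\in P$ ($a\in R$, $m\in M$), then $sa\in(P:_R M)$ or $sm\in P$; $S$-prime ideals are $S$-prime submodules of $R$. A submodule $L$ of $M$ is $S$-copure if there exists $s\in S$ such that $s(L:_M I)\subseteq L+(0:_M I)$ for every ideal $I$ of $R$. A submodule $N$ of $M$ is $S$-quasi-copure if every $S$-prime submodule of $M$ containing $N$ is $S$-copure. *)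

(* Defs.v *)
From HB Require Import structures.
From mathcomp Require Import all_boot all_order all_algebra.
Set Implicit Arguments. Unset Strict Implicit. Unset Printing Implicit Defensive.
Import GRing.Theory.
Local Open Scope ring_scope.

(* Subsets are Prop-valued predicates.  Ideals of R are the submodules of the
   regular module R^o. *)
Section Defs.
Variable R : comNzRingType.

Definition mcs (S : R -> Prop) : Prop :=
  ~ S 0 /\ S 1 /\ (forall s t, S s -> S t -> S (s * t)).

Variable M : lmodType R.

Definition is_submodule (N : M -> Prop) : Prop :=
  N 0 /\ (forall x y, N x -> N y -> N (x + y)) /\
  (forall (a : R) x, N x -> N (a *: x)).

Definition prodIM (I : R -> Prop) : M -> Prop :=
  fun x => exists (n : nat) (a : 'I_n -> R) (m : 'I_n -> M),
    (forall i, I (a i)) /\ x = \sum_(i < n) a i *: m i.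

Definition colonR (L : M -> Prop) : R -> Prop :=
  fun r => forall m : M, L (r *: m).

Definition colonM (L : M -> Prop) (I : R -> Prop) : M -> Prop :=
  fun m => forall a, I a -> L (a *: m).

Definition annM (I : R -> Prop) : M -> Prop :=
  fun m => forall a, I a -> a *: m = 0.

Definition faithful : Prop := forall r : R, (forall m : M, r *: m = 0) -> r = 0.

Definition fin_gen : Prop :=
  exists (n : nat) (g : 'I_n -> M),
    forall x, exists c : 'I_n -> R, x = \sum_(i < n) c i *: g i.

End Defs.

Definition is_ideal (R : comNzRingType) (I : R -> Prop) : Prop :=
  @is_submodule R R^o I.

Section Defs2.
Variable R : comNzRingType.
Variable M : lmodType R.

Definition multiplication_module : Prop :=
  forall N : M -> Prop, is_submodule N ->
    exists J : R -> Prop, is_ideal J /\ (forall x, N x <-> prodIM J x).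

Definition S_prime (S : R -> Prop) (P : M -> Prop) : Prop :=
  is_submodule P /\ (forall s, S s -> ~ colonR P s) /\
  exists s, S s /\ forall (a : R) (m : M), P (a *: m) ->
     colonR P (s * a) \/ P (s *: m).

Definition S_copure (S : R -> Prop) (L : M -> Prop) : Prop :=
  is_submodule L /\
  exists s, S s /\ forall I : R -> Prop, is_ideal I ->
    forall m, colonM L I m ->
      exists l c, L l /\ annM I c /\ s *: m = l + c.

Definition S_quasi_copure (S : R -> Prop) (N : M -> Prop) : Prop :=
  is_submodule N /\
  forall P : M -> Prop, S_prime S P -> (forall x, N x -> P x) -> S_copure S P.

End Defs2.

(* Main.v *)
Require Import Defs.
From mathcomp Require Import all_boot all_order all_algebra.
From mathcomp Require Import fingroup perm.
Set Implicit Arguments. Unset Strict Implicit. Unset Printing Implicit Defensive.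
Import GRing.Theory.
Local Open Scope ring_scope.

Lemma det_lemma (R : comNzRingType) (Q : R -> Prop) : Q 0 -> (forall x y, Q x -> Q y -> Q (x + y)) ->
  (forall a x, Q x -> Q (a * x)) -> forall n (C : 'M[R]_n), (forall i j, Q (C i j)) ->
  Q (\det (1%:M - C) - 1).
Proof.
move=> Q0 QD QM n C HC.
have QN : forall x, Q x -> Q (- x) by move=> x Qx; rewrite -mulN1r; apply: (QM).
rewrite /determinant (bigD1 (1%g : perm.perm_of (ordinal n))) //= perm.odd_perm1 expr0 mul1r addrAC.
apply: (QD).
- apply: (big_ind (fun x => Q (x - 1))).
  + by rewrite subrr.
  + move=> x y Qx Qy.
    have -> : x * y - 1 = y * (x - 1) + (y - 1) by rewrite mulrBr mulr1 mulrC addrA subrK.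
    by apply: (QD) => //; apply: (QM).
  + move=> i _; rewrite perm.perm1 !mxE eqxx mulr1n addrAC subrr add0r; exact: QN.
- apply: big_ind => // s s1.
  have [i si] : exists i, perm.fun_of_perm s i != i.
    apply/existsP; rewrite -negb_forall; apply: contra s1 => /forallP H.
    by apply/eqP/perm.permP => x; rewrite perm.perm1; apply/eqP.
  apply: (QM); rewrite (bigD1 i) //= mulrC; apply: (QM).
  by rewrite !mxE eq_sym (negbTE si) mulr0n sub0r; apply: (QN).
Qed.

Lemma delta_sum0 (R : comNzRingType) (M : lmodType R) n (g : 'I_n -> M) (a : R) k :
  \sum_j (a *+ (k == j)) *: g j = a *: g k.
Proof.
rewrite (bigD1 k) //= big1 ?addr0 => [|j jk].
  by rewrite eqxx mulr1n.
by rewrite eq_sym (negbTE jk) mulr0n scale0r.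
Qed.
Lemma delta_sum (R : comNzRingType) (M : lmodType R) n (g : 'I_n -> M) (a : R) k :
  \sum_j (a%:M : 'M_n) k j *: g j = a *: g k.
Proof. by under eq_bigr => j _ do rewrite mxE; rewrite delta_sum0. Qed.

Lemma kill (R : comNzRingType) (M : lmodType R) n (g : 'I_n -> M) (C : 'M[R]_n) :
  (forall i, g i = \sum_j C i j *: g j) -> forall k, \det (1%:M - C) *: g k = 0.
Proof.
move=> HC k.
have H0 : forall i, \sum_j (1%:M - C) i j *: g j = 0.
  move=> i; under eq_bigr => j _ do rewrite !mxE scalerDl scaleNr.
  by rewrite big_split /= sumrN delta_sum0 scale1r -HC subrr.
rewrite -delta_sum -mul_adj_mx.
under eq_bigr => j _ do rewrite mxE scaler_suml.
rewrite exchange_big /= big1 // => i _.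
under eq_bigr => j _ do rewrite -scalerA.
by rewrite -scaler_sumr H0 scaler0.
Qed.

Section Gen.
Variables (R : comNzRingType) (M : lmodType R).

Lemma sub_sum (N : M -> Prop) : is_submodule N -> forall n (F : 'I_n -> M),
  (forall i, N (F i)) -> N (\sum_(i<n) F i).
Proof. by case=> [N0 [ND _]] n F H; apply: big_ind. Qed.

Lemma ideal_sum (N : R -> Prop) : is_ideal N -> forall n (F : 'I_n -> R),
  (forall i, N (F i)) -> N (\sum_(i<n) F i).
Proof. by case=> [N0 [ND _]] n F H; apply: big_ind. Qed.

Lemma idealM (N : R -> Prop) : is_ideal N -> forall a x, N x -> N (a * x).
Proof. by case=> _ [_ H] a x /(H a). Qed.

Lemma idealMr (N : R -> Prop) : is_ideal N -> forall a x, N x -> N (x * a).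
Proof. by move=> H a x Nx; rewrite mulrC; apply: idealM. Qed.

Lemma idealN (N : R -> Prop) : is_ideal N -> forall x, N x -> N (- x).
Proof. by move=> H x Nx; rewrite -mulN1r; apply: idealM. Qed.

Lemma prodIM_single (I : R -> Prop) a (m : M) : I a -> prodIM I (a *: m).
Proof.
move=> Ia; exists 1%N, (fun _ => a), (fun _ => m); split => //.
by rewrite big_ord1.
Qed.

Lemma prodIM_mono (I J : R -> Prop) (x : M) :
  (forall a, I a -> J a) -> prodIM I x -> prodIM J x.
Proof. by move=> H [n [a [m [Ia ->]]]]; exists n, a, m; split => // i; apply: H. Qed.

Lemma prodIM_sub (I : R -> Prop) : is_ideal I -> is_submodule (@prodIM R M I).
Proof.
move=> HI; split; [|split].
- exists 0%N, (fun _ => 0), (fun _ => 0); split; [by case: HI | by rewrite big_ord0].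
- move=> x y [n1 [a1 [m1 [I1 ->]]]] [n2 [a2 [m2 [I2 ->]]]].
  exists (n1 + n2)%N,
    (fun i => match split i with inl j => a1 j | inr j => a2 j end),
    (fun i => match split i with inl j => m1 j | inr j => m2 j end).
  split.
  + by move=> i; case: (split i).
  + rewrite big_split_ord /=; congr (_ + _); apply: eq_bigr => j _.
    * by have E : split (lshift n2 j) = inl j := unsplitK (inl j); rewrite E.
    * by have E : split (rshift n1 j) = inr j := unsplitK (inr j); rewrite E.
- move=> r x [n [a [m [Ia ->]]]].
  exists n, (fun i => r * a i), m; split.
  + by move=> i; apply: idealM.
  + by rewrite scaler_sumr; apply: eq_bigr => i _; rewrite scalerA.
Qed.

Lemma prodIM_le (N : M -> Prop) (I : R -> Prop) x : is_submodule N ->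
  (forall a m, I a -> N (a *: m)) -> prodIM I x -> N x.
Proof.
move=> HN H [n [a [m [Ia ->]]]]; apply: sub_sum => // i; exact: H.
Qed.

Lemma colonR_ideal (N : M -> Prop) : is_submodule N -> is_ideal (colonR N).
Proof.
case=> [N0 [ND NZ]]; split; [|split].
- by move=> m; rewrite scale0r.
- by move=> x y Hx Hy m; rewrite scalerDl; apply: ND.
- move=> a x Hx m; change (N ((a * x) *: m)); rewrite -scalerA; exact: NZ.
Qed.

Lemma annM_sub (J : R -> Prop) : is_submodule (@annM R M J).
Proof.
split; [|split].
- by move=> a _; rewrite scaler0.
- by move=> x y Hx Hy a Ja; rewrite scalerDr Hx ?Hy // addr0.
- by move=> r x Hx a Ja; rewrite scalerA mulrC -scalerA Hx // scaler0.
Qed.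

Lemma cyc_sub (m : M) : @is_submodule R M (fun x => exists r, x = r *: m).
Proof.
split; [|split].
- by exists 0; rewrite scale0r.
- by move=> x y [r ->] [t ->]; exists (r + t); rewrite scalerDl.
- by move=> a x [r ->]; exists (a * r); rewrite scalerA.
Qed.

Hypothesis mult : multiplication_module M.

Lemma multmodE (N : M -> Prop) : is_submodule N ->
  forall x, N x <-> prodIM (colonR N) x.
Proof.
move=> HN; have [J [HJ E]] := mult HN => x; split.
- move/E; apply: prodIM_mono => a Ja m; apply/E; exact: prodIM_single.
- by apply: prodIM_le => // a m; apply.
Qed.


Lemma nil_add (K : R -> Prop) : is_ideal K -> forall x y k l,
  K (x ^+ k) -> K (y ^+ l) -> K ((x + y) ^+ (k + l)).
Proof.
move=> HK x y k l Hx Hy; rewrite exprDn; apply: ideal_sum => // i.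
rewrite -mulr_natr; apply: idealMr => //.
case: (leqP l i) => li.
- have -> : y ^+ i = y ^+ (i - l) * y ^+ l by rewrite -exprD subnK.
  by apply: idealM => //; apply: idealM.
- have ki : (k <= k + l - i)%N by rewrite -addnBA ?leq_addr // ltnW.
  have -> : x ^+ (k + l - i) = x ^+ (k + l - i - k) * x ^+ k by rewrite -exprD subnK.
  by apply: idealMr => //; apply: idealM.
Qed.

Lemma nil_sum (K : R -> Prop) : is_ideal K -> forall n (f : 'I_n -> R),
  (forall j, exists N, K (f j ^+ N)) -> exists N, K ((\sum_j f j) ^+ N).
Proof.
move=> HK n f H; apply: (big_ind (fun x => exists N, K (x ^+ N))) => //.
- by exists 1%N; rewrite expr1; case: HK.
- by move=> x y [k Hk] [l Hl]; exists (k + l)%N; apply: nil_add.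
Qed.

Hypothesis fg : fin_gen M.
Hypothesis faith : faithful M.

Lemma decomp : exists n (g : 'I_n -> M) (f : 'I_n -> R),
  (forall x, exists c : 'I_n -> R, x = \sum_i c i *: g i) /\ \sum_j f j = 1 /\
  forall j x, exists r, f j *: x = r *: g j.
Proof.
have [n [g Hg]] := fg.
pose A j := colonR (fun x => exists r, x = r *: g j).
have HA : forall j, is_ideal (A j) := fun j => colonR_ideal (cyc_sub (g j)).
have row : forall j, exists c : 'I_n -> R, (forall k, A j (c k)) /\ g j = \sum_k c k *: g k.
  move=> j; have := (multmodE (cyc_sub (g j)) (g j)).1 (ex_intro _ 1 (esym (scale1r _))).
  case=> [n' [a [m [Ha Em]]]].
  have [d Hd] := fin_all_exists (fun t => Hg (m t)).
  exists (fun k => \sum_t a t * d t k); split.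
  - move=> k; apply: (ideal_sum (HA j)) => t; exact: (idealMr (HA j) _ (Ha t)).
  - rewrite Em; under eq_bigr => t _ do rewrite (Hd t) scaler_sumr.
    rewrite exchange_big /=; apply: eq_bigr => k _; rewrite scaler_suml.
    by apply: eq_bigr => t _; rewrite scalerA.
have [C HC] := fin_all_exists row.
pose Cm := \matrix_(i, j) C i j : 'M[R]_n.
have Hk := @kill R M n g Cm.
have Hk' : forall k, \det (1%:M - Cm) *: g k = 0.
  by apply: Hk => i; rewrite {1}(HC i).2; apply: eq_bigr => j _; rewrite mxE.
have D0 : \det (1%:M - Cm) = 0.
  apply: faith => x; have [c ->] := Hg x; rewrite scaler_sumr big1 // => i _.
  by rewrite scalerA mulrC -scalerA Hk' scaler0.
pose Q x := exists e : 'I_n -> R, (forall j, A j (e j)) /\ x = \sum_j e j.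
have : Q (\det (1%:M - Cm) - 1).
  apply: det_lemma.
  - exists (fun _ => 0); split; [by move=> j; case: (HA j) | by rewrite big1].
  - move=> x y [e1 [H1 ->]] [e2 [H2 ->]]; exists (fun j => e1 j + e2 j); split.
    + by move=> j; case: (HA j) => _ [HD _]; apply: HD.
    + by rewrite big_split.
  - move=> a x [e [H ->]]; exists (fun j => a * e j); split.
    + by move=> j; apply: (idealM (HA j)) (H j).
    + by rewrite mulr_sumr.
  - move=> i j; exists (fun j' => if j' == i then C i j else 0); split.
    + move=> j'; case: eqP => [->|_]; [exact: (HC i).1 | by case: (HA j')].
    + rewrite (bigD1 i) //= eqxx big1 ?addr0 ?mxE // => j' /negbTE ->.
      done.
rewrite D0 sub0r => -[e [He E]].
exists n, g, (fun j => - e j); split => //; split.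
- by rewrite sumrN -E opprK.
- by move=> j x; apply: (idealN (HA j) (He j)).
Qed.

Lemma cancel_el (B : R -> Prop) a : is_ideal B ->
  (forall m : M, prodIM B (a *: m)) -> B a.
Proof.
move=> HB H; have [n [g [f [_ [Sf Hf]]]]] := decomp.
pose K r := B (r * a).
have HK : is_ideal K.
  case: HB => B0 [BD BM]; split; [|split].
  - by rewrite /K mul0r.
  - by move=> x y Kx Ky; rewrite /K mulrDl; apply: BD.
  - move=> c x Kx; rewrite /K; change (B (c * x * a)); rewrite -mulrA.
    exact: (BM c).
have f3 : forall j, exists N, K (f j ^+ N).
  move=> j; exists 3%N.
  have [nb [b [y [Hb Ey]]]] := H (f j *: g j).
  have [r Hr] := fin_all_exists (fun t => Hf j (y t)).
  pose bb := \sum_t b t * r t.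
  have Bbb : B bb by apply: ideal_sum => // t; apply: idealMr.
  have E1 : (a * f j * f j - bb) *: g j = 0.
    apply/eqP; rewrite scalerBl subr_eq0; apply/eqP.
    have -> : (a * f j * f j) *: g j = f j *: (a *: (f j *: g j)).
      by rewrite !scalerA [f j * a]mulrC.
    rewrite Ey scaler_sumr /bb scaler_suml; apply: eq_bigr => t _.
    by rewrite scalerA mulrC -scalerA (Hr t) scalerA.
  have E2 : (a * f j * f j - bb) * f j = 0.
    apply: faith => x; have [s Hs] := Hf j x.
    by rewrite -scalerA Hs scalerA mulrC -scalerA E1 scaler0.
  rewrite /K; have -> : f j ^+ 3 * a = bb * f j.
    apply/eqP; rewrite -subr_eq0 -E2; apply/eqP.
    by rewrite mulrBl !exprS expr0 mulr1; congr (_ - _); rewrite mulrC -!mulrA; congr (_ * _); rewrite mulrC -mulrA.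
  exact: idealMr.
have [N HN] := nil_sum HK f3.
by move: HN; rewrite Sf expr1n /K mul1r.
Qed.

End Gen.

Unset Implicit Arguments.
Require Import Defs.
From Stdlib Require Import Classical.
Local Open Scope ring_scope.
Import GRing.Theory.

Theorem theorem3p6 (R : comNzRingType) (S : R -> Prop) (M : lmodType R) :
  mcs S -> fin_gen M -> faithful M -> multiplication_module M ->
  forall I : R -> Prop, is_ideal I ->
    (S_quasi_copure S (@prodIM R M I) <-> @S_quasi_copure R R^o S I).
Proof.
move=> HS fg faith mult I HI; split.
- case=> [_ HQ]; split => // p [Hp [Sp [s [Ss Hs]]]] Ip.
  pose P := @prodIM R M p.
  have HP : is_submodule P := prodIM_sub M Hp.
  have colP : forall r, colonR P r -> p r.
    by move=> r H; apply: (cancel_el mult fg faith Hp).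
  have PS : S_prime S P.
    split=> //; split.
    - move=> t St /colP pt; apply: (Sp t St) => y; change (p (t * y)).
      by rewrite mulrC; apply: (idealM Hp).
    - exists s; split => // a m Pam.
      pose N := fun x : M => exists r, x = r *: m.
      have Km : prodIM (colonR N) m :=
        (multmodE mult (cyc_sub m) m).1 (ex_intro _ 1 (esym (scale1r m))).
      have aK : forall k, colonR N k -> p (a * k).
        move=> k Hk; apply: colP => x; have [r Er] := Hk x.
        rewrite -scalerA Er scalerA mulrC -scalerA.
        by case: HP => _ [_ HZ]; apply: HZ.
      case: (classic (p (s * a))) => [psa|npsa].
      + by left => x; apply: prodIM_single.
      + right.
        have sk : forall k, colonR N k -> p (s * k).
          move=> k Hk; case: (Hs a k (aK k Hk)) => [H|//].
          by exfalso; apply: npsa; have := H 1; rewrite /GRing.scale /= mulr1.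
        case: Km => [n [c [mm [Hc ->]]]]; rewrite scaler_sumr.
        apply: (sub_sum HP) => i; rewrite scalerA; apply: prodIM_single; exact: sk.
  have IP : forall x, prodIM I x -> P x by move=> x; apply: prodIM_mono.
  have [_ [s0 [Ss0 Hc]]] := HQ P PS IP.
  split => //; exists s0; split => // J HJ x Hx.
  pose T := fun y : R => exists l c, p l /\ (forall j, J j -> j * c = 0) /\ y = l + c.
  have HT : is_ideal T.
    split; [|split].
    - exists 0, 0; split; first by case: Hp.
      by split; [move=> j _; rewrite mulr0 | rewrite addr0].
    - move=> y z [l1 [c1 [p1 [A1 ->]]]] [l2 [c2 [p2 [A2 ->]]]].
      exists (l1 + l2), (c1 + c2); split; first by case: Hp => _ [HD _]; apply: HD.
      split; last by rewrite addrACA.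
      by move=> j Jj; rewrite mulrDr A1 // A2 // addr0.
    - move=> a y [l [c [pl [Ac ->]]]]; exists (a * l), (a * c); split.
        exact: (idealM Hp).
      split; last by change (a * (l + c) = a * l + a * c); rewrite mulrDr.
      by move=> j Jj; rewrite mulrCA Ac // mulr0.
  have : T (s0 * x).
    apply: (cancel_el mult fg faith HT) => m.
    have Hxm : colonM P J (x *: m).
      by move=> j Jj; rewrite scalerA; apply: prodIM_single; exact: Hx j Jj.
    have [l [c [Pl [Ac E]]]] := Hc J HJ _ Hxm.
    rewrite -scalerA E; case: (prodIM_sub M HT) => _ [HD _]; apply: HD.
    + by apply: prodIM_mono Pl => a pa; exists a, 0; split => //; split;
        [move=> j _; rewrite mulr0 | rewrite addr0].
    + have := (multmodE mult (annM_sub M J) c).1 Ac; apply: prodIM_mono => k Hk.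
      exists 0, k; split; first by case: Hp.
      split; last by rewrite add0r.
      move=> j Jj; apply: faith => y; rewrite -scalerA.
      by apply: (Hk y).
  by case=> [l [c [pl [Ac E]]]]; exists l, c.
- case=> [_ HQ]; split; first exact: prodIM_sub.
  move=> P [HP [SP [s [Ss Hs]]]] IP.
  pose p := colonR P.
  have Hp : is_ideal p := colonR_ideal HP.
  have Ip : forall a, I a -> p a by move=> a Ia m; apply: IP; apply: prodIM_single.
  have pS : @S_prime R R^o S p.
    split => //; split.
    - move=> t St H; apply: (SP t St) => m.
      by have := H 1 m; rewrite /GRing.scale /= mulr1.
    - exists s; split => // a k pak.
      case: (classic (colonR P (s * a))) => [H|H].
      + left => y m; change (P ((s * a * y) *: m)); rewrite -scalerA; apply: H.
      + right => m; change (P ((s * k) *: m)); rewrite -scalerA.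
        have : P (a *: (k *: m)) by rewrite scalerA; apply: pak.
        by case/Hs.
  have [_ [s0 [Ss0 Hc]]] := HQ p pS Ip.
  split => //; exists s0; split => // J HJ m Hm.
  pose N := fun x : M => exists r, x = r *: m.
  have Km : prodIM (colonR N) m :=
    (multmodE mult (cyc_sub m) m).1 (ex_intro _ 1 (esym (scale1r m))).
  have Kc : forall k, colonR N k -> exists l c, p l /\ (forall j, J j -> j * c = 0)
      /\ s0 * k = l + c.
    move=> k Hk; apply: (Hc J HJ k) => j Jj y.
    change (P ((j * k) *: y)); rewrite -scalerA; have [r ->] := Hk y.
    rewrite scalerA mulrC -scalerA; case: HP => _ [_ HZ]; apply: HZ; exact: Hm.
  pose D := fun x : M => exists l c, P l /\ annM J c /\ x = l + c.
  case: Km => [n [c [mm [Hcs ->]]]]; rewrite scaler_sumr.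
  apply: (big_ind D).
  - exists 0, 0; split; first by case: HP.
    by split; [by case: (annM_sub M J) | rewrite addr0].
  - move=> x y [l1 [c1 [p1 [A1 ->]]]] [l2 [c2 [p2 [A2 ->]]]].
    exists (l1 + l2), (c1 + c2); split; first by case: HP => _ [HD _]; apply: HD.
    split; last by rewrite addrACA.
    by case: (annM_sub M J) => _ [HD _]; apply: HD.
  - move=> i _; rewrite scalerA.
    have [l [c' [pl [Ac E]]]] := Kc _ (Hcs i).
    exists (l *: mm i), (c' *: mm i); split; first exact: pl.
    split; last by rewrite E scalerDl.
    by move=> j Jj; rewrite scalerA Ac // scale0r.
Qed.
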